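(* Let $n\ge1$, let $\Omega$ be the set of all Borel probability measures on $[0,1]$, let $D(x_0,\dots,x_n;p)=\sum_{k=0}^n\binom{n}{k}p^k(1-p)^{n-k}|p-x_k|$, and for $\sigma_0,\dots,\sigma_n,\mu\in\Omega$ put $E(\sigma_0,\dots,\sigma_n;\mu)=\int\cdots\int D(x_0,\dots,x_n;p)\,d\sigma_0(x_0)\cdots d\sigma_n(x_n)\,d\mu(p)$. Then $$\min_{\sigma_0,\dots,\sigma_n\in\Omega}\max_{\mu\in\Omega}E(\sigma_0,\dots,\sigma_n;\mu)=\min_{a_0,\dots,a_n\in[0,1]}\max_{p\in[0,1]}D(a_0,\dots,a_n;p)=\min_{a_0,\dots,a_n\in[0,1]}\|D(a_0,\dots,a_n;\cdot)\|_\infty.$$ *)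

(* Defs.v *)
From HB Require Import structures.
From mathcomp Require Import all_boot all_order all_algebra.
From mathcomp Require Import all_classical all_reals all_analysis.
Set Implicit Arguments. Unset Strict Implicit. Unset Printing Implicit Defensive.
Import Order.TTheory GRing.Theory Num.Theory.
Local Open Scope classical_set_scope.
Local Open Scope ring_scope.

Section Defs.
Variable R : realType.

(* Omega: Borel probability measures on [0,1], represented as Borel
   probability measures on R concentrated on [0,1]. *)
Definition inOmega (P : probability R R) : Prop := P `[0%R, 1%R]%classic = 1%E.

(* D(x_0,...,x_n; p); only the coordinates x 0, ..., x n are used. *)
Definition Dfun (n : nat) (x : nat -> R) (p : R) : R :=
  \sum_(k < n.+1) ('C(n, k))%:R * p ^+ k * (1 - p) ^+ (n - k) * `|p - x k|.

Definition upd (x : nat -> R) (k : nat) (y : R) : nat -> R :=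
  fun i => if i == k then y else x i.

(* iterint s k F x = \int ... \int F(x[0:=y_0,...,k-1:=y_{k-1}])
     ds_0(y_0) ... ds_{k-1}(y_{k-1})   (s_0 innermost) *)
Fixpoint iterint (s : nat -> probability R R) (k : nat)
  (F : (nat -> R) -> \bar R) (x : nat -> R) : \bar R :=
  match k with
  | 0 => F x
  | k'.+1 => (\int[s k']_y iterint s k' F (upd x k' y))%E
  end.

Definition Efun (n : nat) (s : nat -> probability R R) (mu : probability R R)
  : \bar R :=
  (\int[mu]_p iterint s n.+1 (fun x => (Dfun n x p)%:E) (fun _ => 0%R))%E.

Definition adm_meas (n : nat) (s : nat -> probability R R) : Prop :=
  forall k, (k <= n)%N -> inOmega (s k).

Definition adm_pt (n : nat) (a : nat -> R) : Prop :=
  forall k, (k <= n)%N -> a k \in `[0%R, 1%R].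

Definition worstE (n : nat) (s : nat -> probability R R) : \bar R :=
  ereal_sup [set Efun n s mu | mu in inOmega].

Definition worstD (n : nat) (a : nat -> R) : \bar R :=
  ereal_sup [set (Dfun n a p)%:E | p in `[0%R, 1%R]%classic].

Definition supnormD (n : nat) (a : nat -> R) : \bar R :=
  ereal_sup [set (`|Dfun n a p|)%:E | p in `[0%R, 1%R]%classic].

End Defs.

(* Main.v *)
Require Import Defs.
From HB Require Import structures.
From mathcomp Require Import all_boot all_order all_algebra.
From mathcomp Require Import all_classical all_reals all_analysis.
From mathcomp Require Import measurable_realfun ring lra.
Import Order.TTheory GRing.Theory Num.Theory.
Import numFieldNormedType.Exports.
Local Open Scope classical_set_scope.
Local Open Scope ring_scope.

Set Implicit Arguments. Unset Strict Implicit. Unset Printing Implicit Defensive.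

Section S1.
Context (R : realType).

Definition cc (n k : nat) (p : R) : R := ('C(n, k))%:R * p ^+ k * (1 - p) ^+ (n - k).

Lemma lip_cont (f : R -> R) : (forall x y, `|f x - f y| <= `|x - y|) -> continuous f.
Proof.
move=> H x; apply/cvgrPdist_le => e e0; near=> y.
apply: le_trans (H x y) _; near: y.
apply/nbhs_normP; exists e => //= z; rewrite /ball_ /= => h; exact: ltW.
Unshelve. all: by end_near.
Qed.

Lemma cc_cont n k : continuous (cc n k).
Proof.
move=> x; rewrite /cc.
apply: cvgM; first apply: cvgM.
- exact: cvg_cst.
- exact: exprn_continuous.
- have h1 : {for x, continuous (fun p : R => 1 - p)}.
    by apply: cvgB; [exact: cvg_cst| exact: cvg_id].
  exact: (continuous_comp h1 (@exprn_continuous R (n - k) (1 - x))).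
Qed.

Lemma cc_ge0 n k p : p \in `[0, 1] -> 0 <= cc n k p.
Proof.
rewrite in_itv /= => /andP[p0 p1]; rewrite /cc.
by rewrite !mulr_ge0 // exprn_ge0 // subr_ge0.
Qed.

Lemma cc_sum n p : \sum_(k < n.+1) cc n k p = 1.
Proof.
have h := exprDn (1 - p) p n; rewrite subrK expr1n in h; rewrite h.
by apply: eq_bigr => i _; rewrite /cc -[RHS]mulr_natl; ring.
Qed.

Lemma cc_le1 n (k : 'I_n.+1) p : p \in `[0, 1] -> cc n k p <= 1.
Proof.
move=> hp; rewrite -(cc_sum n p) (bigD1 k) //= lerDl.
by apply: sumr_ge0 => i _; exact: cc_ge0.
Qed.

Definition Hs n (f : nat -> R -> R) (p : R) : R := \sum_(k < n.+1) cc n k p * f k p.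

Lemma Hs_cont n f : (forall k, continuous (f k)) -> continuous (Hs n f).
Proof.
move=> fc.
have key : forall m, continuous (fun p => \sum_(k < m) cc n k p * f k p).
  elim=> [|m IH].
    have -> : (fun p => \sum_(k < 0) cc n k p * f k p) = fun=> 0.
      by apply: funext => p; rewrite big_ord0.
    by move=> x; exact: cvg_cst.
  have -> : (fun p => \sum_(k < m.+1) cc n k p * f k p) =
     (fun p => \sum_(k < m) cc n k p * f k p + cc n m p * f m p).
    by apply: funext => p; rewrite big_ord_recr.
  move=> x; apply: cvgD; first exact: IH.
  by apply: cvgM; [exact: cc_cont| exact: fc].
exact: key.
Qed.

Lemma Dfun_Hs n a p : Dfun n a p = Hs n (fun k p => `|p - a k|) p.
Proof. by []. Qed.


Lemma abs_lip (a : R) x y : `| `|x - a| - `|y - a| | <= `|x - y|.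
Proof. by apply: le_trans (ler_dist_dist _ _) _; rewrite opprB addrA subrK. Qed.

Lemma abs_cont (a : R) : continuous (fun x => `|x - a|).
Proof. by apply: lip_cont => x y; exact: abs_lip. Qed.

Lemma Dfun_cont n (a : nat -> R) : continuous (Dfun n a).
Proof. exact: (@Hs_cont n (fun k p => `|p - a k|) (fun k => @abs_cont (a k))). Qed.

Lemma Dfun_ge0 n (a : nat -> R) p : p \in `[0, 1] -> 0 <= Dfun n a p.
Proof.
move=> hp; rewrite Dfun_Hs /Hs; apply: sumr_ge0 => i _.
by rewrite mulr_ge0 // cc_ge0.
Qed.

Lemma esup_att (S : set (\bar R)) x : S x -> ubound S x -> ereal_sup S = x.
Proof.
move=> Sx ub; apply/eqP; rewrite eq_le ge_ereal_sup //=.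
exact: ereal_sup_ubound.
Qed.

Lemma einf_att (S : set (\bar R)) x : S x -> lbound S x -> ereal_inf S = x.
Proof.
move=> Sx lb; apply/eqP; rewrite eq_le ereal_inf_lbound //=.
exact: le_ereal_inf_tmp.
Qed.

Lemma cont_max {f : R -> R} : continuous f ->
  exists2 p, p \in `[0, 1] & forall q, q \in `[0, 1] -> f q <= f p.
Proof.
move=> fc; apply: EVT_max => //; exact: continuous_subspaceT.
Qed.

Lemma worstD_att n (a : nat -> R) : exists2 p, p \in `[0, 1] &
  (forall q, q \in `[0, 1] -> Dfun n a q <= Dfun n a p) /\ worstD n a = (Dfun n a p)%:E.
Proof.
have [p hp mx] := cont_max (@Dfun_cont n a).
exists p => //; split => //; apply: esup_att; first by exists p => //; rewrite inE in hp.
by move=> _ [q hq <-]; rewrite lee_fin; apply: mx; rewrite inE.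
Qed.

Lemma min_exists m (F : (nat -> R) -> R) :
 (forall a b, F a - F b <= \sum_(k < m) `|a k - b k|) ->
 exists a, (forall k, (k < m)%N -> a k \in `[0, 1]) /\
   (forall b, (forall k, (k < m)%N -> b k \in `[0, 1]) -> F a <= F b).
Proof.
elim: m F => [|m IH] F HF.
  exists (fun _ => 0); split => // b _.
  by rewrite -subr_le0; apply: le_trans (HF _ _) _; rewrite big_ord0.
have HFt t : forall a b, F (upd a m t) - F (upd b m t) <= \sum_(k < m) `|a k - b k|.
  move=> a b; apply: le_trans (HF _ _) _; rewrite big_ord_recr /= /upd eqxx subrr normr0 addr0.
  rewrite (eq_bigr (fun i : 'I_m => `|a i - b i|)) ?lexx // => i _.
  by rewrite ltn_eqF ?ltn_ord.
have := fun t => IH _ (HFt t); move/choice => [A HA].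
pose h t := F (upd (A t) m t).
have hlip t t' : h t - h t' <= `|t - t'|.
  have [_ mn] := HA t; have [adm' _] := HA t'.
  apply: (@le_trans _ _ (F (upd (A t') m t) - h t')).
    by rewrite lerD2r; apply: mn.
  apply: le_trans (HF _ _) _; rewrite big_ord_recr /= /upd eqxx.
  rewrite big1 ?add0r // => i _; by rewrite ltn_eqF ?subrr ?normr0 ?ltn_ord.
have hc : continuous h.
  apply: lip_cont => x y; rewrite ler_norml hlip andbT lerNl opprB distrC; exact: hlip.
have [ts hts hmin] : exists2 c, c \in `[0, 1] & forall t, t \in `[0, 1] -> h c <= h t.
  by apply: EVT_min => //; exact: continuous_subspaceT.
exists (upd (A ts) m ts); split.
  move=> k; rewrite ltnS leq_eqVlt => /orP[/eqP ->|km]; first by rewrite /upd eqxx.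
  by rewrite /upd ifN ?neq_ltn ?km //; have [adm _] := HA ts; exact: adm.
move=> b hb.
have -> : F b = F (upd b m (b m)).
  by congr F; apply: funext => i; rewrite /upd; case: eqP => // ->.
apply: (@le_trans _ _ (h (b m))); first by apply: hmin; apply: hb.
have [_ mn] := HA (b m); apply: mn => k km; apply: hb; exact: ltnW.
Qed.

End S1.

Section S2.
Context (R : realType).

Lemma mean_exists (phi : R -> R) :
  (forall p q, p \in `[0, 1] -> q \in `[0, 1] -> p - q <= phi p + phi q) ->
  (forall p, p \in `[0, 1] -> 0 <= phi p) ->
  exists2 m, m \in `[0, 1] & forall p, p \in `[0, 1] -> `|p - m| <= phi p.
Proof.
move=> htri hpos.
pose E := [set p - phi p | p in `[0%R, 1%R]%classic].
have h0 : (0 : R) \in `[0, 1] by rewrite in_itv /= lexx ler01.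
have En : E !=set0 by exists (0 - phi 0); exists 0.
have Eub : ubound E 1.
  move=> _ [p hp <-]; have {}hp : p \in `[0, 1] := hp; have := hpos p hp; move: hp; rewrite in_itv /= => /andP[_ p1].
  move=> hp0; lra.
have hs : has_sup E by split => //; exists 1.
have sup1 : sup E <= 1 by exact: ge_sup.
exists (Num.max 0 (sup E)).
  by rewrite in_itv /= le_max lexx /= ge_max ler01 sup1.
move=> p hp; rewrite ler_norml; apply/andP; split.
  rewrite lerNl opprB lerBlDl ge_max; apply/andP; split.
    by have := hpos p hp; move: hp; rewrite in_itv /= => /andP[p0 _]; lra.
  apply: ge_sup => // _ [q hq <-]; have {}hq : q \in `[0, 1] := hq.
  have := htri q p hq hp; lra.
have hm : sup E <= Num.max 0 (sup E) by rewrite le_max lexx orbT.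
have : p - phi p <= sup E by apply: sup_upper_bound => //; exists p.
lra.
Qed.


Lemma conc (P : probability R R) (f : R -> \bar R) : inOmega P ->
  measurable_fun setT f ->
  (\int[P]_x f x = \int[P]_(x in `[0%R, 1%R]%classic) f x)%E.
Proof.
move=> hP mf.
have m01 : measurable (`[0%R, 1%R]%classic : set R) by exact: measurable_itv.
rewrite [RHS]integral_mkcond; apply: ae_eq_integral => //.
  exact: ((measurable_restrictT f m01).1 (measurable_funTS mf)).
exists (~` `[0%R, 1%R]%classic); split.
- exact: measurableC.
- have h := @probability_setC _ _ _ P _ m01; rewrite hP subee // in h.
- move=> x /= h hx; apply: h => _; by rewrite patchE mem_set.
Qed.

Lemma absd_cont (q : R) : continuous (fun y : R => `|q - y|).
Proof.
apply: lip_cont => x y; apply: le_trans (ler_dist_dist _ _) _.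
by rewrite (_ : q - x - (q - y) = y - x); [rewrite distrC | ring].
Qed.

Lemma absd_mfun (q : R) : measurable_fun setT (fun y : R => (`|q - y|)%:E).
Proof. apply/measurable_EFinP; apply: continuous_measurable_fun; exact: absd_cont. Qed.

Lemma ilip (P : probability R R) p : inOmega P ->
  P.-integrable setT (fun y => (`|p - y|)%:E).
Proof.
move=> hP; apply/integrableP; split; first exact: absd_mfun.
have m01 : measurable (`[0%R, 1%R]%classic : set R) by exact: measurable_itv.
rewrite conc //; last first.
  apply: measurableT_comp => //; exact: absd_mfun.
apply: (@le_lt_trans _ _ (\int[P]_(x in `[0%R, 1%R]%classic) (`|p| + 1)%:E)%E).
  apply: ge0_le_integral => //.
  - apply: measurable_funTS; apply: measurableT_comp => //; exact: absd_mfun.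
  - move=> y hy; have {}hy : y \in `[0, 1] := hy.
    rewrite /= normr_id lee_fin; apply: le_trans (ler_normB _ _) _.
    rewrite lerD2l; move: hy; rewrite in_itv /= => /andP[y0 y1].
    by rewrite ger0_norm.
rewrite integral_cst // [X in (_ * X)%E](_ : _ = 1%E) ?mule1; [exact: ltry | exact: hP].
Qed.

Definition phi (P : probability R R) (p : R) : R := fine (\int[P]_y (`|p - y|)%:E)%E.

Lemma phiE (P : probability R R) p : inOmega P ->
  (\int[P]_y (`|p - y|)%:E)%E = (phi P p)%:E.
Proof. by move=> hP; rewrite fineK //; apply: integrable_fin_num => //; exact: ilip. Qed.

Lemma phi_ge0 (P : probability R R) p : 0 <= phi P p.
Proof. by apply: fine_ge0; apply: integral_ge0 => y _; rewrite lee_fin. Qed.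

Lemma int_aff (P : probability R R) (C c p : R) : inOmega P ->
  (\int[P]_y (C + c * `|p - y|)%:E)%E = (C + c * phi P p)%:E.
Proof.
move=> hP.
under eq_integral do rewrite EFinD EFinM.
rewrite integralD //.
- rewrite integral_cst // [X in (_ * X)%E](_ : _ = 1%E) ?mule1 ?integralZl ?phiE //; [exact: ilip | exact: probability_setT].
- exact: finite_measure_integrable_cst.
- by apply: integrableZl => //; exact: ilip.
Qed.


Lemma aff_mfun (C c q : R) : measurable_fun setT (fun y : R => (C + c * `|q - y|)%:E).
Proof.
apply/measurable_EFinP; apply: continuous_measurable_fun => x.
apply: cvgD; first exact: cvg_cst.
apply: cvgM; first exact: cvg_cst.
exact: absd_cont.
Qed.

Lemma phi_lip (P : probability R R) p q : inOmega P ->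
  phi P p <= phi P q + `|p - q|.
Proof.
move=> hP; rewrite -lee_fin -phiE // addrC -(mul1r (phi P q)) -int_aff //.
apply: ge0_le_integral => //.
- exact: absd_mfun.
- exact: aff_mfun.
- move=> y _; rewrite lee_fin mul1r.
  by rewrite (_ : p - y = (p - q) + (q - y)) ?ler_normD //; ring.
Qed.

Lemma phi_tri (P : probability R R) p q : inOmega P ->
  p - q <= phi P p + phi P q.
Proof.
move=> hP; apply: le_trans (ler_norm _) _.
rewrite -lee_fin EFinD -!phiE //.
rewrite -integralD //; [|exact: ilip|exact: ilip].
apply: (@le_trans _ _ (\int[P]_y (cst (`|p - q|)%:E) y)%E).
  by rewrite integral_cst // [X in (_ * X)%E](_ : _ = 1%E) ?mule1 //; exact: probability_setT.
under [leRHS]eq_integral do rewrite -EFinD.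
apply: ge0_le_integral => //.
- by move=> y _; rewrite /= lee_fin.
- apply/measurable_EFinP; apply: continuous_measurable_fun => x.
  by apply: cvgD; exact: absd_cont.
- move=> y _; rewrite /= lee_fin.
  by rewrite (_ : p - q = (p - y) - (q - y)) ?ler_normB //; ring.
Qed.

Lemma phi_cont (P : probability R R) : inOmega P -> continuous (phi P).
Proof.
move=> hP; apply: lip_cont => x y; rewrite ler_norml; apply/andP; split.
  by have := phi_lip y x hP; rewrite distrC; lra.
by have := phi_lip x y hP; lra.
Qed.


Lemma iter_formula n (s : nat -> probability R R) p : adm_meas n s ->
  forall k, (k <= n.+1)%N -> forall x,
  iterint s k (fun x => (Dfun n x p)%:E) x =
  (\sum_(j < n.+1) cc n j p * (if (j < k)%N then phi (s j) p else `|p - x j|))%:E.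
Proof.
move=> hs; elim=> [|k IH] hk x.
  by rewrite /=; congr EFin; apply: eq_bigr => j _.
have hk' : (k < n.+1)%N := hk.
pose k' := Ordinal hk'.
set C := \sum_(j < n.+1 | j != k') cc n j p * (if (j < k)%N then phi (s j) p else `|p - x j|).
transitivity (\int[s k]_y (C + cc n k p * `|p - y|)%:E)%E.
  rewrite [LHS]/=.
  apply: eq_integral => y _.
  rewrite IH; last exact: ltnW.
  congr EFin.
  rewrite (bigD1 k') // [X in _ = X]addrC.
  congr (_ + _).
    by rewrite /= ltnn /upd eqxx.
  rewrite /C; apply: eq_bigr => j hj.
  have hj' : (nat_of_ord j == k) = false by apply: negbTE hj.
  by rewrite /upd hj'.
rewrite int_aff; last exact: hs.
congr EFin; rewrite [RHS](bigD1 k') // addrC; congr (_ + _).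
  by rewrite /= ltnSn.
rewrite /C; apply: eq_bigr => j hj.
have hj' : (nat_of_ord j == k) = false by apply: negbTE hj.
by rewrite [in RHS]ltnS [in RHS]leq_eqVlt hj'.
Qed.

Definition gS n (s : nat -> probability R R) (p : R) : R := Hs n (fun j p => phi (s j) p) p.

Lemma Efun_eq n (s : nat -> probability R R) mu : adm_meas n s ->
  Efun n s mu = (\int[mu]_p (gS n s p)%:E)%E.
Proof.
move=> hs; apply: eq_integral => p _; rewrite (@iter_formula n s p hs) //.
by congr EFin; apply: eq_bigr => j _; rewrite ltn_ord.
Qed.



Lemma Hs_ext n (f g : nat -> R -> R) p : (forall k, (k <= n)%N -> f k p = g k p) ->
  Hs n f p = Hs n g p.
Proof. by move=> h; apply: eq_bigr => k _; rewrite h // -ltnS ltn_ord. Qed.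

Lemma gS_cont n (s : nat -> probability R R) : adm_meas n s -> continuous (gS n s).
Proof.
move=> hs.
have -> : gS n s = Hs n (fun k p => if (k <= n)%N then phi (s k) p else 0).
  by apply: funext => p; apply: Hs_ext => k hk; rewrite hk.
apply: Hs_cont => k; case hk: (k <= n)%N; last by move=> x; exact: cvg_cst.
exact: phi_cont (hs k hk).
Qed.


Lemma gS_ge0 n (s : nat -> probability R R) p : p \in `[0, 1] -> 0 <= gS n s p.
Proof.
move=> hp; rewrite /gS /Hs; apply: sumr_ge0 => i _.
by rewrite mulr_ge0 ?cc_ge0 ?phi_ge0.
Qed.

Lemma dirac_om (p : R) : p \in `[0, 1] -> inOmega (\d_p : probability R R).
Proof.
move=> hp; rewrite /inOmega; transitivity (\d_p `[0%R, 1%R]%classic : \bar R) => //.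
by rewrite diracE mem_set.
Qed.

Lemma worstE_att n (s : nat -> probability R R) : adm_meas n s ->
  exists2 p, p \in `[0, 1] &
   (forall q, q \in `[0, 1] -> gS n s q <= gS n s p) /\
   worstE n s = (gS n s p)%:E /\
   exists2 mu, inOmega mu & Efun n s mu = worstE n s.
Proof.
move=> hs.
have gc := gS_cont hs.
have [p hp mx] := cont_max gc.
have mg : measurable_fun setT (fun p => (gS n s p)%:E).
  by apply/measurable_EFinP; exact: continuous_measurable_fun.
have Ed : Efun n s (\d_p : probability R R) = (gS n s p)%:E.
  rewrite Efun_eq // integral_dirac //.
  by rewrite [X in (X * _)%E](_ : _ = 1%E) ?mul1e //; exact: diracT.
have ub : forall mu, inOmega mu -> (Efun n s mu <= (gS n s p)%:E)%E.
  move=> mu hmu; rewrite Efun_eq // conc //.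
  have m01 : measurable (`[0%R, 1%R]%classic : set R) by exact: measurable_itv.
  apply: (@le_trans _ _ (\int[mu]_(x in `[0%R, 1%R]%classic) (cst (gS n s p)%:E) x)%E).
    apply: ge0_le_integral => //.
    - by move=> x hx; rewrite lee_fin; apply: gS_ge0.
    - exact: measurable_funTS.
  by rewrite integral_cst // [X in (_ * X)%E](_ : _ = 1%E) ?mule1.
have Ew : worstE n s = (gS n s p)%:E.
  apply: esup_att; first by exists (\d_p : probability R R) => //; exact: dirac_om.
  by move=> _ [mu hmu <-]; exact: ub.
exists p => //; split => //; split => //.
by exists (\d_p : probability R R); [exact: dirac_om | rewrite Ed Ew].
Qed.

Definition sd (a : nat -> R) : nat -> probability R R := fun k => \d_(a k).

Lemma phi_dirac (a0 p : R) : phi (\d_a0 : probability R R) p = `|p - a0|.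
Proof.
rewrite /phi integral_dirac; last exact: absd_mfun.
rewrite [X in (X * _)%E](_ : _ = 1%E) ?mul1e //.
all: first [exact: diracT | exact: measurableT | done].
Qed.

Lemma sd_adm n a : adm_pt n a -> adm_meas n (sd a).
Proof. by move=> ha k hk; apply: dirac_om; exact: ha. Qed.

Lemma gS_sd n a p : gS n (sd a) p = Dfun n a p.
Proof. by apply: eq_bigr => k _; rewrite /sd phi_dirac. Qed.

End S2.

Unset Implicit Arguments. Set Strict Implicit.

Theorem theorem4p2 (R : realType) (n : nat) (hn : (1 <= n)%N) :
  (* the inner maxima are attained *)
  (forall s : nat -> probability R R, adm_meas n s ->
     exists2 mu, inOmega mu & Efun n s mu = worstE n s) /\
  (forall a : nat -> R, adm_pt n a ->
     exists2 p, p \in `[0%R, 1%R] & (Dfun n a p)%:E = worstD n a) /\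
  (* the outer minima are attained *)
  (exists2 s, adm_meas n s &
     worstE n s = ereal_inf [set worstE n s' | s' in @adm_meas R n]) /\
  (exists2 a, adm_pt n a &
     worstD n a = ereal_inf [set worstD n a' | a' in @adm_pt R n]) /\
  (exists2 a, adm_pt n a &
     supnormD n a = ereal_inf [set supnormD n a' | a' in @adm_pt R n]) /\
  (* the three min-max values coincide *)
  ereal_inf [set worstE n s' | s' in @adm_meas R n]
    = ereal_inf [set worstD n a' | a' in @adm_pt R n] /\
  ereal_inf [set worstD n a' | a' in @adm_pt R n]
    = ereal_inf [set supnormD n a' | a' in @adm_pt R n].
Proof.
pose F := fun a : nat -> R => fine (worstD n a).
have Fat : forall a, exists2 p, p \in `[0, 1] &
    (forall q, q \in `[0, 1] -> Dfun n a q <= F a) /\ F a = Dfun n a p /\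
    worstD n a = (F a)%:E.
  move=> a; have [p hp [mx E]] := worstD_att n a.
  by exists p => //; rewrite /F E /=; split.
have FE a : worstD n a = (F a)%:E by have [p _ [_ [_ ->]]] := Fat a.
have Flip : forall a b, F a - F b <= \sum_(k < n.+1) `|a k - b k|.
  move=> a b; have [p hp [_ [-> _]]] := Fat a; have [_ _ [lb _]] := Fat b.
  apply: (@le_trans _ _ (Dfun n a p - Dfun n b p)); first by rewrite lerD2l lerN2; apply: lb.
  rewrite !Dfun_Hs /Hs -sumrB; apply: ler_sum => k _; rewrite -mulrBr.
  have h1 : `|p - a k| - `|p - b k| <= `|a k - b k|.
    apply: le_trans (lerB_dist _ _) _.
    by rewrite (_ : p - a k - (p - b k) = b k - a k); [rewrite distrC | ring].
  have c0 := cc_ge0 n k hp; have c1 := cc_le1 k hp.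
  have d0 : 0 <= `|a k - b k| by [].
  apply: le_trans (ler_wpM2l c0 h1) _.
  by have := ler_wpM2r d0 c1; rewrite mul1r.
have [ast [hast hmin]] := min_exists Flip.
have aadm : adm_pt n ast by move=> k hk; exact: hast.
have key : forall s, adm_meas n s -> (worstD n ast <= worstE n s)%E.
  move=> s hs; have [p hp [mxp [Ew _]]] := worstE_att hs.
  have : forall j, exists m : R, (j <= n)%N -> m \in `[0, 1] /\
      forall q, q \in `[0, 1] -> `|q - m| <= phi (s j) q.
    move=> j; case hj: (j <= n)%N; last by exists 0.
    have [m hm1 hm2] := @mean_exists _ (phi (s j))
      (fun p q _ _ => phi_tri p q (hs j hj)) (fun p _ => phi_ge0 _ p).
    by exists m.
  move/choice => [m hm].
  have madm : forall k, (k < n.+1)%N -> m k \in `[0, 1] by move=> k hk; have [] := hm k hk.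
  have [q hq [_ [Fq _]]] := Fat m.
  rewrite FE Ew lee_fin; apply: (le_trans (hmin m madm)); rewrite Fq.
  apply: (le_trans _ (mxp q hq)).
  rewrite Dfun_Hs /gS /Hs; apply: ler_sum => k _; apply: ler_wpM2l; first exact: cc_ge0.
  by have [_ h] := hm k (ltn_ord k); exact: h.
have Es : worstE n (sd ast) = worstD n ast.
  have [p hp [mx [Ew _]]] := worstE_att (sd_adm aadm).
  rewrite Ew gS_sd /worstD; apply/esym/esup_att; first by exists p.
  by move=> _ [q hq <-]; rewrite lee_fin -!gS_sd; apply: mx.
have infE : ereal_inf [set worstE n s' | s' in @adm_meas R n] = worstD n ast.
  apply: einf_att; first by exists (sd ast) => //; exact: sd_adm.
  by move=> _ [s hs <-]; exact: key.
have infD : ereal_inf [set worstD n a' | a' in @adm_pt R n] = worstD n ast.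
  apply: einf_att; first by exists ast.
  by move=> _ [b hb <-]; rewrite !FE lee_fin; apply: hmin => k hk; exact: hb.
have supE : @supnormD R n = @worstD R n.
  apply: funext => a; rewrite /supnormD /worstD; congr ereal_sup.
  apply/seteqP; split => _ [p hp <-]; exists p => //; rewrite ger0_norm //; exact: Dfun_ge0.
split.
  by move=> s hs; have [p _ [_ [_ h]]] := worstE_att hs.
split.
  by move=> a _; have [p hp [_ E]] := worstD_att n a; exists p.
split; first by exists (sd ast); [exact: sd_adm | rewrite infE Es].
split; first by exists ast => //; rewrite infD.
split; first by exists ast => //; rewrite supE infD.
by rewrite infE infD supE.
Qed.
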